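(* Let $P\in\mathbb{R}_+^{n\times n}$ be sub-stochastic, $w\in\mathbb{R}^n_+$, and $c\in\mathbb{R}^n$, and let $\mathcal X=\{x\in\mathbb{R}^n:\,x=S_0^w(P'x+c)\}$ be the set of equilibria. Let $x(t)$ be the sequence defined by $x(t+1)=S_0^w(P'x(t)+c)$, $t\ge0$, with $x(0)=x_0$. Then: (i) $\mathcal X$ admits a minimal element $\underline x$ and a maximal element $\overline x$ (with respect to the entrywise order on $\mathbb{R}^n$); (ii) if $x_0=0$, then $x(t)\to\underline x$ as $t\to+\infty$; (iii) if $x_0=w$, then $x(t)\to\overline x$ as $t\to+\infty$; (iv) writing $\underline x(c)$ and $\overline x(c)$ for the minimal and maximal equilibria as functions of $c$ (with $P,w$ fixed), the maps $c\mapsto\underline x(c)$ and $c\mapsto\overline x(c)$ are monotone nondecreasing from $\mathbb{R}^n$ to $\mathcal L_0^w=\{x:\,0\le x\le w\}$.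
   Context: A nonnegative matrix $P\in\mathbb{R}_+^{n\times n}$ is sub-stochastic if $P\mathbbm{1}\le\mathbbm{1}$ (this includes stochastic matrices, $P\mathbbm{1}=\mathbbm{1}$). For $w\in\mathbb{R}^n_+$, $(S_0^w(x))_i=\min\{\max\{x_i,0\},w_i\}$. $P'$ is the transpose of $P$. Vectors are ordered entrywise. *)

(* Defs.v *)
From HB Require Import structures.
From mathcomp Require Import all_boot all_order all_algebra.
From mathcomp Require Import all_classical all_reals all_analysis.
Set Implicit Arguments. Unset Strict Implicit. Unset Printing Implicit Defensive.
Import Order.TTheory GRing.Theory Num.Theory.
Local Open Scope ring_scope.
Local Open Scope classical_set_scope.

Definition lev (R : realType) (n : nat) (x y : 'cV[R]_n) : Prop :=
  forall i, x i 0 <= y i 0.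

Definition substochastic (R : realType) (n : nat) (P : 'M[R]_n) : Prop :=
  (forall i j, 0 <= P i j) /\ (forall i, \sum_(j < n) P i j <= 1).

Definition sat0 (R : realType) (n : nat) (w x : 'cV[R]_n) : 'cV[R]_n :=
  \col_i Num.min (Num.max (x i 0) 0) (w i 0).

Definition step (R : realType) (n : nat) (P : 'M[R]_n) (w c x : 'cV[R]_n) :=
  sat0 w (P^T *m x + c).

Definition equilibria (R : realType) (n : nat) (P : 'M[R]_n) (w c : 'cV[R]_n)
  : set 'cV[R]_n := [set x | x = step P w c x].

Definition traj (R : realType) (n : nat) (P : 'M[R]_n) (w c x0 : 'cV[R]_n)
  (t : nat) : 'cV[R]_n := iter t (step P w c) x0.

Definition is_least_elt (R : realType) (n : nat) (X : set 'cV[R]_n) (x : 'cV[R]_n) :=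
  X x /\ forall y, X y -> lev x y.
Definition is_greatest_elt (R : realType) (n : nat) (X : set 'cV[R]_n) (x : 'cV[R]_n) :=
  X x /\ forall y, X y -> lev y x.

Definition box0 (R : realType) (n : nat) (w : 'cV[R]_n) : set 'cV[R]_n :=
  [set x | lev 0 x /\ lev x w].

(* Main.v *)
Require Import Defs.
From HB Require Import structures.
From mathcomp Require Import all_boot all_order all_algebra.
From mathcomp Require Import all_classical all_reals all_analysis.
Import Order.TTheory GRing.Theory Num.Theory.
Import numFieldTopology.Exports numFieldNormedType.Exports.
Local Open Scope ring_scope.
Local Open Scope classical_set_scope.
Set Implicit Arguments. Unset Strict Implicit.

Section Aux.
Variables (R : realType) (n : nat).

Lemma clip_mono (a b w : R) : a <= b ->
  Num.min (Num.max a 0) w <= Num.min (Num.max b 0) w.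
Proof.
move=> ab; rewrite le_min; apply/andP; split; last by rewrite ge_min lexx orbT.
rewrite ge_min !le_max !ge_max ab /= lexx.
case: (leP 0 b) => b0 //=.
by rewrite (ltW (le_lt_trans ab b0)).
Qed.

Lemma stepE (P : 'M[R]_n) (w c x : 'cV[R]_n) i :
  step P w c x i 0 =
  Num.min (Num.max (\sum_j P j i * x j 0 + c i 0) 0) (w i 0).
Proof.
rewrite /step /sat0 !mxE; congr (Num.min (Num.max (_ + _) _) _).
by apply: eq_bigr => j _; rewrite mxE.
Qed.

Lemma step_mono (P : 'M[R]_n) (w c1 c2 x y : 'cV[R]_n) :
  (forall i j, 0 <= P i j) -> lev c1 c2 -> lev x y ->
  lev (step P w c1 x) (step P w c2 y).
Proof.
move=> P0 c12 xy i; rewrite !stepE; apply: clip_mono; apply: lerD => //.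
by apply: ler_sum => j _; apply: ler_wpM2l.
Qed.

Lemma step_box (P : 'M[R]_n) (w c x : 'cV[R]_n) :
  lev 0 w -> box0 w (step P w c x).
Proof.
move=> w0; split => i; rewrite stepE.
  by rewrite mxE le_min le_max lexx orbT /=; have := w0 i; rewrite mxE.
by rewrite ge_min lexx orbT.
Qed.

Lemma lev_trans (x y z : 'cV[R]_n) : lev x y -> lev y z -> lev x z.
Proof. by move=> h1 h2 i; apply: le_trans (h1 i) (h2 i). Qed.

Lemma lev_refl (x : 'cV[R]_n) : lev x x.
Proof. by move=> i. Qed.

Lemma mx_cvg_entry (u : nat -> 'cV[R]_n) (L : 'cV[R]_n) :
  (forall i, (fun t => u t i 0) @ \oo --> L i 0) -> u @ \oo --> L.
Proof.
move=> h; apply/cvg_mx_entourageP => A entA.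
apply: filter_forall => i; apply: filter_forall => j.
rewrite ord1; have /cvg_app_entourageP := h i.
move=> /(_ A entA); apply: filterS => t /=; by rewrite inE.
Qed.

Lemma entry_cvg (u : nat -> 'cV[R]_n) (L : 'cV[R]_n) i :
  u @ \oo --> L -> (fun t => u t i 0) @ \oo --> L i 0.
Proof.
move=> uL; apply/(@cvg_app_entourageP R nat (fun t => u t i 0) \oo _ (L i 0)) => A entA.
have H := proj1 (@cvg_mx_entourageP _ _ _ (u @ \oo) (fmap_filter u eventually_filter) L) uL A entA.
apply: (@filterS _ _ eventually_filter _ _ _ H) => t /= /(_ i 0).
by rewrite inE.
Qed.

Lemma step_cvg (P : 'M[R]_n) (w c : 'cV[R]_n) (u : nat -> 'cV[R]_n) L :
  u @ \oo --> L -> (fun t => step P w c (u t)) @ \oo --> step P w c L.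
Proof.
move=> uL; apply: mx_cvg_entry => i; rewrite stepE.
under eq_fun do rewrite stepE.
apply: (continuous2_cvg _ (h := fun a b => Num.min a b)); last exact: cvg_cst.
  exact: (@min_continuous _ R^o (_, _)).
apply: (continuous2_cvg _ (h := fun a b => Num.max a b)); last exact: cvg_cst.
  exact: (@max_continuous _ R^o (_, _)).
apply: cvgD; last exact: cvg_cst.
apply: cvg_big => //; first exact: add_continuous.
move=> j _; apply: cvgMr; exact: entry_cvg.
Qed.

Definition collim (u : nat -> 'cV[R]_n) : 'cV[R]_n :=
  \col_i limn (fun t => u t i 0).

Lemma collim_cvg (u : nat -> 'cV[R]_n) :
  (forall i, cvgn (fun t => u t i 0)) -> u @ \oo --> collim u.
Proof. by move=> h; apply: mx_cvg_entry => i; rewrite mxE; exact: h. Qed.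

Lemma collim_le (u : nat -> 'cV[R]_n) y :
  (forall i, cvgn (fun t => u t i 0)) -> (forall t, lev (u t) y) ->
  lev (collim u) y.
Proof.
move=> h hy i; rewrite mxE; apply: limr_le; first exact: h.
by near=> t; apply: hy.
Unshelve. all: by end_near.
Qed.

Lemma collim_ge (u : nat -> 'cV[R]_n) y :
  (forall i, cvgn (fun t => u t i 0)) -> (forall t, lev y (u t)) ->
  lev y (collim u).
Proof.
move=> h hy i; rewrite mxE; apply: limr_ge; first exact: h.
by near=> t; apply: hy.
Unshelve. all: by end_near.
Qed.

Lemma mx_cvg_uniq (u : nat -> 'cV[R]_n) (a b : 'cV[R]_n) :
  u @ \oo --> a -> u @ \oo --> b -> a = b.
Proof.
move=> ha hb; apply/matrixP => i j; have -> : j = 0 by rewrite ord1.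
have ha' := @entry_cvg _ _ i ha; have hb' := @entry_cvg _ _ i hb.
apply: (cvg_unique _ ha' hb'); exact: Rhausdorff.
Qed.

Section Fix.
Variables (P : 'M[R]_n) (w : 'cV[R]_n).
Hypothesis P0 : forall i j, 0 <= P i j.
Hypothesis w0 : lev 0 w.

Lemma trajS c x0 t : traj P w c x0 t.+1 = step P w c (traj P w c x0 t).
Proof. by []. Qed.

Lemma traj_box c x0 t : box0 w x0 -> box0 w (traj P w c x0 t).
Proof. by case: t => [//|t] _; rewrite trajS; apply: step_box. Qed.

Lemma box_w : box0 w w.
Proof. by split => // i. Qed.

Lemma box_0 : box0 w 0.
Proof. by split => // i. Qed.

Lemma lo_incr c t : lev (traj P w c 0 t) (traj P w c 0 t.+1).
Proof.
elim: t => [|t IH]; first by have [] := traj_box c 1 box_0.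
by rewrite trajS [X in lev _ X]trajS; apply: step_mono.
Qed.

Lemma hi_decr c t : lev (traj P w c w t.+1) (traj P w c w t).
Proof.
elim: t => [|t IH]; first by have [] := traj_box c 1 box_w.
by rewrite trajS [X in lev _ X]trajS; apply: step_mono.
Qed.

Lemma lo_cvgn c i : cvgn (fun t => traj P w c 0 t i 0).
Proof.
apply: nondecreasing_is_cvgn.
  by apply/nondecreasing_seqP => t; apply: lo_incr.
exists (w i 0) => _ [t _ <-]; by have [] := traj_box c t box_0.
Qed.

Lemma hi_cvgn c i : cvgn (fun t => traj P w c w t i 0).
Proof.
apply: nonincreasing_is_cvgn.
  by apply/nonincreasing_seqP => t; apply: hi_decr.
exists 0 => _ [t _ <-]; have [+ _] := traj_box c t box_w.
by move=> /(_ i); rewrite mxE.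
Qed.

Lemma fixed_of_cvg c x0 L : traj P w c x0 @ \oo --> L -> L = step P w c L.
Proof.
move=> h; apply: (@mx_cvg_uniq (fun t => traj P w c x0 t.+1)).
  by rewrite (cvg_shiftS (traj P w c x0)).
exact: step_cvg.
Qed.

End Fix.

End Aux.

Theorem proposition1 (R : realType) (n : nat) (P : 'M[R]_n) (w : 'cV[R]_n) :
  substochastic P -> lev 0 w ->
  exists xlo xhi : 'cV[R]_n -> 'cV[R]_n,
    (* (i) *)
    (forall c, is_least_elt (equilibria P w c) (xlo c) /\
               is_greatest_elt (equilibria P w c) (xhi c)) /\
    (* (ii) *)
    (forall c, traj P w c 0 @ \oo --> xlo c) /\
    (* (iii) *)
    (forall c, traj P w c w @ \oo --> xhi c) /\
    (* (iv) *)
    (forall c, box0 w (xlo c) /\ box0 w (xhi c)) /\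
    (forall c1 c2, lev c1 c2 -> lev (xlo c1) (xlo c2) /\ lev (xhi c1) (xhi c2)).
Proof.
move=> [P0 _] w0.
pose xlo c := collim (traj P w c 0).
pose xhi c := collim (traj P w c w).
have clo c : traj P w c 0 @ \oo --> xlo c by apply: collim_cvg => i; apply: lo_cvgn.
have chi c : traj P w c w @ \oo --> xhi c by apply: collim_cvg => i; apply: hi_cvgn.
have flo c : xlo c = step P w c (xlo c) by apply: (fixed_of_cvg (clo c)).
have fhi c : xhi c = step P w c (xhi c) by apply: (fixed_of_cvg (chi c)).
have eqbox c y : y = step P w c y -> box0 w y by move=> ->; apply: step_box.
have lo_le c1 c2 y : lev c1 c2 -> y = step P w c2 y -> lev (xlo c1) y.
  move=> c12 hy; apply: collim_le => [i|t]; first exact: lo_cvgn.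
  elim: t => [|t IH]; first by have [] := eqbox _ _ hy.
  by rewrite trajS hy; apply: step_mono.
have hi_ge c1 c2 y : lev c1 c2 -> y = step P w c1 y -> lev y (xhi c2).
  move=> c12 hy; apply: collim_ge => [i|t]; first exact: hi_cvgn.
  elim: t => [|t IH]; first by have [] := eqbox _ _ hy.
  by rewrite trajS hy; apply: step_mono.
exists xlo, xhi; split; [|split; [|split; [|split]]].
- move=> c; split; split.
  + exact: flo.
  + by move=> y hy; apply: (lo_le c c) => //; apply: lev_refl.
  + exact: fhi.
  + by move=> y hy; apply: (hi_ge c c) => //; apply: lev_refl.
- exact: clo.
- exact: chi.
- by move=> c; split; apply: (eqbox c).
- move=> c1 c2 c12; split; first exact: lo_le.
  exact: hi_ge.
Qed.
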